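(* Let $\Delta$ be a complete unimodular fan in $N_\mathbb R$, $\Sigma$ a tropical cycle in $N_\mathbb R$ compatible with $\Delta$, and $\tau\in\Delta$. Then $\rho(\overline\Sigma\cap O(\tau))=\overline{\rho(\Sigma)}\cap O(\tau)$ as tropical cycles in $O(\tau)$.
   Context: $N_\mathbb R(\Delta)=\bigsqcup_{\tau\in\Delta}O(\tau)$, $O(\tau)=N_\mathbb R/\mathbb R\tau$, closures taken in $N_\mathbb R(\Delta)$; for $\Sigma$ compatible with $\Delta$ (for each polyhedron $P$ of $\Sigma$ and $\sigma\in\Delta$, either $\sigma\subseteq\rho(P)$ or $\mathrm{relint}(\sigma)\cap\rho(P)=\emptyset$, $\rho$ = recession cone), $\overline\Sigma\cap O(\tau)=\bigcup_{\tau\subseteq\rho(\sigma)}\pi_\tau(\sigma)$ is a tropical cycle with the weights of the corresponding faces of $\Sigma$. The recession fan $\rho(\Sigma)$ of a tropical cycle $\Sigma$ (with a polyhedral structure such that each $\rho(\sigma)$ is a cone of a fan) is the fan of the cones $\rho(\sigma)$, where a maximal cone $\tau'$ gets weight $m(\tau')=\sum_{\sigma\in\Sigma,\rho(\sigma)=\tau'}m(\sigma)$; this is a balanced fan. *)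

(* Defs.v *)
From mathcomp Require Import all_boot all_order all_algebra.
From mathcomp Require Import boolp classical_sets reals.

Set Implicit Arguments.
Unset Strict Implicit.
Unset Printing Implicit Defensive.

Import Order.TTheory GRing.Theory Num.Theory.
Local Open Scope ring_scope.
Local Open Scope classical_set_scope.

Section TropicalDefs.
Variable R : realType.

(* N_R = R^n as row vectors, N = Z^n the integral points. *)
Definition isint (x : R) := exists z : int, x = z%:~R.
Definition intv n (v : 'rV[R]_n) := forall i, isint (v 0 i).
Definition dotv n (u v : 'rV[R]_n) : R := \sum_i u 0 i * v 0 i.

Definition polyhedron n (P : set 'rV[R]_n) :=
  exists k (A : 'M[R]_(k, n)) (b : 'rV[R]_k),
    (forall i j, isint (A i j)) /\
    P = [set x | forall i, dotv (row i A) x <= b 0 i].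

Definition polycone n (P : set 'rV[R]_n) :=
  exists k (A : 'M[R]_(k, n)),
    (forall i j, isint (A i j)) /\
    P = [set x | forall i, dotv (row i A) x <= 0].

Definition face n (F P : set 'rV[R]_n) :=
  F !=set0 /\
  exists (a : 'rV[R]_n) (b : R),
    (forall x, P x -> dotv a x <= b) /\ F = P `&` [set x | dotv a x = b].

Definition lspan n (S : set 'rV[R]_n) : set 'rV[R]_n :=
  [set v | exists k (c : 'I_k -> R) (x : 'I_k -> 'rV[R]_n),
             (forall i, S (x i)) /\ v = \sum_i c i *: x i].
Definition Lsp n (P : set 'rV[R]_n) := lspan [set x - y | x in P & y in P].

(* pdim P d : the polyhedron P has dimension d (dim of L_P is d) *)
Definition pdim n (P : set 'rV[R]_n) (d : nat) :=
  (exists X : 'M[R]_(d, n), (forall i, Lsp P (row i X)) /\ row_free X) /\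
  (forall X : 'M[R]_(d.+1, n), (forall i, Lsp P (row i X)) -> ~~ row_free X).

(* relative interior (algebraic form, for convex sets in finite dimension) *)
Definition relint n (P : set 'rV[R]_n) : set 'rV[R]_n :=
  [set x | P x /\ forall v, Lsp P v -> exists2 e : R, 0 < e & P (x + e *: v)].

Definition rec_cone n (P : set 'rV[R]_n) : set 'rV[R]_n :=
  [set v | forall x, P x -> forall t : R, 0 <= t -> P (x + t *: v)].

Definition polycomplex n k (C : 'I_k -> set 'rV[R]_n) :=
  injective C /\
  (forall i, polyhedron (C i) /\ C i !=set0) /\
  (forall i F, face F (C i) -> exists j, C j = F) /\
  (forall i j, C i `&` C j !=set0 ->
     face (C i `&` C j) (C i) /\ face (C i `&` C j) (C j)).

Definition pure n k (C : 'I_k -> set 'rV[R]_n) (d : nat) :=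
  forall i, exists j, C i `<=` C j /\ pdim (C j) d.

(* v is a lattice representative of the primitive normal vector u_{sigma/tau} *)
Definition primitive_normal n (tau sigma : set 'rV[R]_n) (v : 'rV[R]_n) :=
  intv v /\ Lsp sigma v /\
  (exists x, tau x /\ exists2 e : R, 0 < e & sigma (x + e *: v)) /\
  (forall w, intv w -> Lsp sigma w -> exists c : int, Lsp tau (w - v *~ c)).

Definition balanced n k (C : 'I_k -> set 'rV[R]_n) (m : 'I_k -> int) (d : nat) :=
  (0 < d)%N ->
  forall t, pdim (C t) d.-1 ->
  exists v : 'I_k -> 'rV[R]_n,
    (forall s, (pdim (C s) d /\ C t `<=` C s) -> primitive_normal (C t) (C s) (v s)) /\
    (forall s, ~ (pdim (C s) d /\ C t `<=` C s) -> v s = 0) /\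
    Lsp (C t) (\sum_s v s *~ m s).

Definition tropical_cycle n k (d : nat) (C : 'I_k -> set 'rV[R]_n) (m : 'I_k -> int) :=
  polycomplex C /\ pure C d /\ (forall i, pdim (C i) d -> m i != 0) /\ balanced C m d.

Definition unimodular_cone n (P : set 'rV[R]_n) :=
  exists (B : 'M[R]_n) (S : pred 'I_n),
    (forall i j, isint (B i j)) /\ (\det B = 1 \/ \det B = -1) /\
    P = [set x | exists c : 'I_n -> R, (forall i, 0 <= c i) /\
                   (forall i, ~~ S i -> c i = 0) /\ x = \sum_i c i *: row i B].

Definition fan n l (D : 'I_l -> set 'rV[R]_n) :=
  polycomplex D /\ forall i, polycone (D i).
Definition complete_fan n l (D : 'I_l -> set 'rV[R]_n) :=
  fan D /\ forall x, exists i, D i x.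
Definition unimodular_fan n l (D : 'I_l -> set 'rV[R]_n) :=
  fan D /\ forall i, unimodular_cone (D i).

Definition compatible n k l (C : 'I_k -> set 'rV[R]_n) (D : 'I_l -> set 'rV[R]_n) :=
  forall i j, D j `<=` rec_cone (C i) \/ relint (D j) `&` rec_cone (C i) = set0.

(* O(tau) = N_R / R tau with lattice N / (N cap R tau), presented as R^p via
   the linear map x |-> x *m M *)
Definition quotient_presentation n p (tau : set 'rV[R]_n) (M : 'M[R]_(n, p)) :=
  (forall i j, isint (M i j)) /\
  (forall x, x *m M = 0 <-> Lsp tau x) /\
  (forall y, intv y -> exists x, intv x /\ x *m M = y).

Definition proj n p (M : 'M[R]_(n, p)) (P : set 'rV[R]_n) : set 'rV[R]_p :=
  [set x *m M | x in P].

(* closure in N_R(Delta) intersected with O(tau): cells pi_tau(sigma) for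
   tau in rho(sigma), with the weight of sigma (other cells get weight 0) *)
Definition orbit_cells n p k (M : 'M[R]_(n, p)) (C : 'I_k -> set 'rV[R]_n) :=
  fun i => proj M (C i).
Definition orbit_weights n k (tau : set 'rV[R]_n) (C : 'I_k -> set 'rV[R]_n)
  (w : 'I_k -> int) : 'I_k -> int :=
  fun i => if `[< tau `<=` rec_cone (C i) >] then w i else 0.

(* recession fan of a cycle of dimension e: cones rho(sigma); a maximal cone
   gets the sum of the weights of the e-cells sigma with rho(sigma) = cone *)
Definition recfan_cells n k (C : 'I_k -> set 'rV[R]_n) := fun i => rec_cone (C i).
Definition recfan_weights n k (e : nat) (C : 'I_k -> set 'rV[R]_n)
  (w : 'I_k -> int) : 'I_k -> int :=
  fun i => if `[< pdim (C i) e >] then w i else 0.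

Definition wfun n k (Q : 'I_k -> set 'rV[R]_n) (w : 'I_k -> int) (e : nat)
  (y : 'rV[R]_n) : int :=
  \sum_(i < k) (if `[< pdim (Q i) e /\ Q i y >] then w i else 0).

(* equality of e-dimensional tropical cycles (i.e. up to refinement):
   the weight functions agree outside finitely many polyhedra of dim < e *)
Definition cycle_eq n (e : nat) k1 (Q1 : 'I_k1 -> set 'rV[R]_n) (w1 : 'I_k1 -> int)
  k2 (Q2 : 'I_k2 -> set 'rV[R]_n) (w2 : 'I_k2 -> int) :=
  exists q (Z : 'I_q -> set 'rV[R]_n),
    (forall j, polyhedron (Z j) /\ exists e', pdim (Z j) e' /\ (e' < e)%N) /\
    (forall y, (forall j, ~ Z j y) -> wfun Q1 w1 e y = wfun Q2 w2 e y).

End TropicalDefs.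

(* Main.v *)
Require Import Defs.
From mathcomp Require Import all_boot all_order all_algebra.
From mathcomp Require Import boolp classical_sets reals.
From mathcomp Require Import ring lra zify.
Set Implicit Arguments.
Unset Strict Implicit.
Unset Printing Implicit Defensive.
Import Order.TTheory GRing.Theory Num.Theory.
Local Open Scope ring_scope.
Local Open Scope classical_set_scope.

Section Lin.
Variable R : realType.

Lemma lspan_sub {n : nat} (S : set 'rV[R]_n) r (Y : 'M[R]_(r, n)) :
  (forall x, S x -> (x <= Y)%MS) -> forall x, lspan S x -> (x <= Y)%MS.
Proof.
move=> H x [k [c [xs [Hx ->]]]].
apply: summx_sub => i _; apply: scalemx_sub; exact: H.
Qed.

Lemma rs_lspan {n : nat} (S : set 'rV[R]_n) r (Y : 'M[R]_(r, n)) :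
  (forall i, S (row i Y)) -> forall x, (x <= Y)%MS -> lspan S x.
Proof.
move=> H x Hx; exists r, (fun i => (x *m pinvmx Y) 0 i), (fun i => row i Y).
by split => //; rewrite -mulmx_sum_row mulmxKpV.
Qed.

Lemma lspan_in {n : nat} (S : set 'rV[R]_n) x : S x -> lspan S x.
Proof.
move=> Sx; exists 1%N, (fun _ => 1), (fun _ => x); split => //.
by rewrite big_ord1 scale1r.
Qed.

Lemma row_free_new {n : nat} r (s : 'rV[R]_n) (X : 'M[R]_(r, n)) :
  row_free X -> ~~ (s <= X)%MS -> row_free (col_mx s X).
Proof.
move=> /eqP hX hs; rewrite /row_free -addsmxE.
have lt : (X < s + X)%MS.
  rewrite ltmxE addsmxSr /=; apply/negP => h; move/negP: hs; apply.
  exact: submx_trans (addsmxSl _ _) h.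
have := rank_ltmx lt; rewrite hX => h1.
have h2 := (mxrank_adds_leqif s X).1.
have h3 := rank_leq_row s.
rewrite hX in h2; apply/eqP; apply/anti_leq; rewrite h1 andbT.
apply: leq_trans h2 _; by rewrite leq_add2r.
Qed.

Lemma lspan_basis {n : nat} (S : set 'rV[R]_n) :
  exists r (Y : 'M[R]_(r, n)), forall x, lspan S x <-> (x <= Y)%MS.
Proof.
pose Pr := fun r => `[< exists X : 'M[R]_(r, n), (forall i, S (row i X)) /\ row_free X >].
have exP : exists i, Pr i.
  exists 0%N; apply/asboolP; exists 0; split; first by case.
  by rewrite /row_free mxrank0.
have ubP : forall i, Pr i -> (i <= n)%N.
  move=> i /asboolP [X [_ /eqP <-]]; exact: rank_leq_col.
case: (ex_maxnP exP ubP) => r /asboolP [X [HS HF]] Hmax.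
have HX : forall s, S s -> (s <= X)%MS.
  move=> s Ss; apply/negPn/negP => hs.
  have : (r.+1 <= r)%N.
    apply: Hmax; apply/asboolP; exists (col_mx s X); split; last exact: row_free_new.
    move=> i; rewrite -(splitK (i : 'I_(1 + r))); case: (split _) => j /=.
      change (S (row (lshift r j) (col_mx s X))).
      by rewrite rowKu row_id.
    change (S (row (rshift 1 j) (col_mx s X))).
    by rewrite rowKd.
  by rewrite ltnn.
exists r, X => x; split; first exact: lspan_sub.
exact: rs_lspan.
Qed.

Lemma pdim_rank {n : nat} (P : set 'rV[R]_n) r (Y : 'M[R]_(r, n)) d :
  (forall x, Lsp P x <-> (x <= Y)%MS) -> (pdim P d <-> d = \rank Y).
Proof.
move=> HY; split.
  move=> [[X [HX /eqP HF]] Hno].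
  have XY : (X <= Y)%MS by apply/row_subP => i; apply/HY.
  have := mxrankS XY; rewrite HF => le.
  apply/eqP; rewrite eqn_leq le /=; apply/negP => lt.
  have [i hi] : exists i, ~~ (row i Y <= X)%MS.
    apply: contrapT => H.
    have : (Y <= X)%MS.
      apply/row_subP => i; apply/negPn/negP => h; apply: H; by exists i.
    move/mxrankS; rewrite HF => h'; by apply: lt.
  have := Hno (col_mx (row i Y) X); move/(_ _)/negP; apply.
    move=> j; apply/HY; rewrite -(splitK (j : 'I_(1 + d))); case: (split _) => k /=.
      change (row (lshift d k) (col_mx (row i Y) X) <= Y)%MS.
      by rewrite rowKu row_id row_sub.
    change (row (rshift 1 k) (col_mx (row i Y) X) <= Y)%MS.
    rewrite rowKd; exact: submx_trans (row_sub _ _) XY.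
  by apply: row_free_new => //; apply/eqP.
move=> ->; split.
  exists (row_base Y); split; last exact: row_base_free.
  move=> i; apply/HY; by rewrite -(eq_row_base Y) row_sub.
move=> X HX; apply/negP => /eqP hX.
have XY : (X <= Y)%MS by apply/row_subP => i; apply/HY.
by have := mxrankS XY; rewrite hX ltnn.
Qed.


Lemma dotvD {n : nat} (a x y : 'rV[R]_n) : dotv a (x + y) = dotv a x + dotv a y.
Proof. by rewrite /dotv -big_split; apply: eq_bigr => i _; rewrite mxE mulrDr. Qed.

Lemma dotvZ {n : nat} (a x : 'rV[R]_n) c : dotv a (c *: x) = c * dotv a x.
Proof. by rewrite /dotv mulr_sumr; apply: eq_bigr => i _; rewrite mxE mulrCA. Qed.

Lemma bound (al be ga : R) : (forall t, 0 <= t -> al + t * be <= ga) -> be <= 0.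
Proof.
move=> H; rewrite leNgt; apply/negP => hb.
have h0 : 0 <= (`|ga - al| + 1) / be.
  by apply: divr_ge0; [apply: addr_ge0 | exact: ltW].
have := H _ h0; rewrite divfK ?gt_eqF //; have := ler_norm (ga - al); lra.
Qed.

Definition hpoly {n : nat} k (A : 'M[R]_(k, n)) (b : 'rV[R]_k) : set 'rV[R]_n :=
  [set x | forall i, dotv (row i A) x <= b 0 i].

Lemma rec_proj {n : nat} k (A : 'M[R]_(k, n)) (b : 'rV[R]_k) p (M : 'M[R]_(n, p))
  (tau : set 'rV[R]_n) z :
  hpoly A b !=set0 -> tau `<=` rec_cone (hpoly A b) ->
  (forall x, x *m M = 0 <-> Lsp tau x) -> tau z -> z *m M = 0 ->
  (forall kk, Lsp tau kk -> exists s, tau (s *: z - kk)) ->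
  rec_cone (proj M (hpoly A b)) = proj M (rec_cone (hpoly A b)).
Proof.
move=> [x0 Px0] Htau Hker tz zM Hz.
apply/seteqP; split; last first.
  move=> _ [w Hw <-] _ [x Px <-] t t0; exists (x + t *: w); first exact: Hw.
  by rewrite mulmxDl scalemxAl.
move=> v Hv.
have [x1 Px1 Ex1] := Hv _ (ex_intro2 _ _ x0 Px0 erefl) 1 ler01.
have [u uM] : exists u, u *m M = v.
  by exists (x1 - x0); rewrite mulmxBl Ex1 scale1r addrC addKr.
have Fz : forall i, dotv (row i A) z <= 0.
  move=> i; apply: (@bound (dotv (row i A) x0) _ (b 0 i)) => t t0.
  by have := Htau _ tz _ Px0 t t0 i; rewrite dotvD dotvZ.
have Fu : forall i, dotv (row i A) z = 0 -> dotv (row i A) u <= 0.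
  move=> i hz; apply: (@bound (dotv (row i A) x0) _ (b 0 i)) => t t0.
  have [xt Pxt Ext] := Hv _ (ex_intro2 _ _ x0 Px0 erefl) t t0.
  have : Lsp tau (xt - x0 - t *: u).
    apply/Hker; rewrite !mulmxBl Ext -scalemxAl uM.
    by rewrite addrAC addrK subrr.
  move=> /Hz [s hs].
  have := Htau _ hs _ Pxt 1 ler01 i.
  have -> : xt + 1 *: (s *: z - (xt - x0 - t *: u)) = x0 + t *: u + s *: z.
    apply/rowP => j; rewrite !mxE; ring.
  by rewrite !dotvD !dotvZ hz mulr0 addr0.
pose S := \sum_i `|dotv (row i A) u / dotv (row i A) z|.
exists (u + S *: z); last by rewrite mulmxDl -scalemxAl zM scaler0 addr0.
have Hw : forall i, dotv (row i A) (u + S *: z) <= 0.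
  move=> i; rewrite dotvD dotvZ.
  have := Fz i; rewrite le_eqVlt => /orP [/eqP hz|hz].
    by rewrite hz mulr0 addr0; apply: Fu.
  have hS : `|dotv (row i A) u / dotv (row i A) z| <= S.
    rewrite /S (bigD1 i) //= lerDl; apply: sumr_ge0 => j _; exact: normr_ge0.
  have hq : dotv (row i A) u / dotv (row i A) z * dotv (row i A) z = dotv (row i A) u.
    by rewrite divfK // lt_eqF.
  have := ler_norm (- (dotv (row i A) u / dotv (row i A) z)); rewrite normrN.
  move: hq hS hz; set q := _ / _; set au := dotv _ u; set az := dotv _ z.
  move=> hq hS hz hN; rewrite -hq; nra.
move=> x Px t t0 i; rewrite dotvD dotvZ.
have := Px i; have := Hw i; nra.
Qed.


Lemma lspan_ind {n : nat} (S W : set 'rV[R]_n) : W 0 ->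
  (forall x y, W x -> W y -> W (x + y)) -> (forall c x, W x -> W (c *: x)) ->
  S `<=` W -> lspan S `<=` W.
Proof.
move=> W0 WD WZ SW _ [k [c [xs [Hx ->]]]].
by apply: (big_ind W) => // i _; apply: WZ; apply: SW.
Qed.

Lemma Lsp_mono {n : nat} (P Q : set 'rV[R]_n) : P `<=` Q -> Lsp P `<=` Lsp Q.
Proof.
move=> PQ _ [k [c [xs [Hx ->]]]]; exists k, c, xs; split => // i.
have [a Pa [b Pb <-]] := Hx i; exists a; first exact: PQ.
by exists b => //; exact: PQ.
Qed.

Lemma subB_mx {n : nat} r (X : 'M[R]_(r, n)) (a b : 'rV[R]_n) :
  (a <= X)%MS -> (b <= X)%MS -> (a - b <= X)%MS.
Proof. by move=> ha hb; rewrite -scaleN1r; apply: addmx_sub ha (scalemx_sub _ hb). Qed.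

Lemma Lsp_proj {n : nat} {p : nat} (M : 'M[R]_(n, p)) (P : set 'rV[R]_n) r (X : 'M[R]_(r, n)) :
  (forall x, Lsp P x <-> (x <= X)%MS) ->
  forall y, Lsp (proj M P) y <-> (y <= X *m M)%MS.
Proof.
move=> HX y; split.
  move: y; apply: lspan_sub => _ [_ [a Pa <-] [_ [b Pb <-] <-]].
  rewrite -mulmxBl; apply: submxMr; apply/HX; apply: lspan_in.
  by exists a => //; exists b.
move=> hy.
have hw : ((y *m pinvmx (X *m M)) *m X <= X)%MS := submxMl _ _.
move/HX: hw => [kk [c [xs [Hxs E]]]].
exists kk, c, (fun i => xs i *m M); split.
  move=> i; have [a Pa [b Pb <-]] := Hxs i.
  exists (a *m M); first by exists a.
  by exists (b *m M); [exists b | rewrite mulmxBl].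
rewrite -(mulmxKpV hy) mulmxA E mulmx_suml; apply: eq_bigr => i _.
by rewrite scalemxAl.
Qed.

Lemma rec_rec {n : nat} (tau C : set 'rV[R]_n) :
  tau `<=` rec_cone (rec_cone C) <-> tau `<=` rec_cone C.
Proof.
split => H x /H Hx.
  have h0 : rec_cone C 0 by move=> c Cc t _; rewrite scaler0 addr0.
  by have := Hx _ h0 1 ler01; rewrite add0r scale1r.
move=> y Hy t t0 c Cc s s0.
rewrite scalerDr addrA scalerA; apply: Hx; first exact: Hy.
exact: mulr_ge0.
Qed.

Lemma cone_facts {n : nat} (B : 'M[R]_n) (S : pred 'I_n) (tau : set 'rV[R]_n)
  p (M : 'M[R]_(n, p)) :
  tau = [set x | exists c : 'I_n -> R, (forall i, 0 <= c i) /\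
                   (forall i, ~~ S i -> c i = 0) /\ x = \sum_i c i *: row i B] ->
  (forall x, x *m M = 0 <-> Lsp tau x) ->
  exists z, tau z /\ z *m M = 0 /\
    (forall kk, Lsp tau kk -> exists s, tau (s *: z - kk)).
Proof.
move=> Etau Hker.
pose W := [set x : 'rV[R]_n | exists c : 'I_n -> R,
   (forall i, ~~ S i -> c i = 0) /\ x = \sum_i c i *: row i B].
have LW : Lsp tau `<=` W.
  apply: lspan_ind.
  - exists (fun=> 0); split => //; rewrite big1 // => i _; exact: scale0r.
  - move=> _ _ [c1 [h1 ->]] [c2 [h2 ->]]; exists (fun i => c1 i + c2 i); split.
      by move=> i hi; rewrite h1 // h2 // addr0.
    by rewrite -big_split; apply: eq_bigr => i _; rewrite scalerDl.
  - move=> a _ [c [h ->]]; exists (fun i => a * c i); split.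
      by move=> i hi; rewrite h // mulr0.
    by rewrite scaler_sumr; apply: eq_bigr => i _; rewrite scalerA.
  - move=> v [a ta [b tb <-]]; move: ta tb; rewrite Etau.
    move=> -[c1 [_ [h1 ->]]] [c2 [_ [h2 ->]]]; exists (fun i => c1 i - c2 i); split.
      by move=> i hi; rewrite h1 // h2 // subrr.
    by rewrite -sumrB; apply: eq_bigr => i _; rewrite scalerBl.
pose z := \sum_i (if S i then 1 else 0 : R) *: row i B.
have tz : tau z.
  rewrite Etau.
  exists (fun i => if S i then 1 else 0 : R); split.
    by move=> i; case: (S i).
  by split => // i /negbTE ->.
have t0 : tau 0.
  rewrite Etau.
  exists (fun=> 0); split => //; split => //.
  by rewrite big1 // => i _; exact: scale0r.
exists z; split => //; split.
  apply/Hker; have -> : z = z - 0 by rewrite subr0.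
  by apply: lspan_in; exists z => //; exists 0.
move=> kk /LW [a [ha ->]]; exists (\sum_i `|a i|).
rewrite Etau; exists (fun i => (\sum_j `|a j|) * (if S i then 1 else 0) - a i).
split; last split.
- move=> i; case: (boolP (S i)) => hi.
    rewrite mulr1 subr_ge0; apply: le_trans (ler_norm _) _.
    rewrite (bigD1 i) //= lerDl; apply: sumr_ge0 => j _; exact: normr_ge0.
  by rewrite ha // mulr0 subrr.
- by move=> i /negbTE hi; rewrite hi mulr0 sub0r ha ?hi // oppr0.
- rewrite /z scaler_sumr -sumrB; apply: eq_bigr => i _.
  by rewrite scalerA scalerBl.
Qed.

End Lin.

Theorem lemma3 (R : realType) (n : nat)
  (l : nat) (D : 'I_l -> set 'rV[R]_n)
  (d k : nat) (C : 'I_k -> set 'rV[R]_n) (m : 'I_k -> int)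
  (t : 'I_l) (kt : nat) (p : nat) (M : 'M[R]_(n, p)) :
  complete_fan D -> unimodular_fan D ->
  tropical_cycle d C m ->
  compatible C D ->
  pdim (D t) kt ->
  quotient_presentation (D t) M ->
  let e := (d - kt)%N in
  (* rho( closure(Sigma) cap O(tau) ) *)
  let lhsQ := recfan_cells (orbit_cells M C) in
  let lhsW := recfan_weights e (orbit_cells M C) (orbit_weights (D t) C m) in
  (* closure(rho(Sigma)) cap O(tau) *)
  let rhsQ := orbit_cells M (recfan_cells C) in
  let rhsW := orbit_weights (D t) (recfan_cells C) (recfan_weights d C m) in
  cycle_eq e lhsQ lhsW rhsQ rhsW.
Proof.
move=> _ [_ Hunim] [Hcx [Hpure [_ _]]] _ HdimT [_ [Hker _]] e lhsQ lhsW rhsQ rhsW.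
exists 0%N, (fun _ => set0); split; first by case.
move=> y _; rewrite /wfun; apply: eq_bigr => i _.
rewrite /lhsQ /lhsW /rhsQ /rhsW /recfan_cells /orbit_cells /recfan_weights /orbit_weights.
have [B [S [_ [_ Etau]]]] := Hunim t.
have [z [tz [zM Hz]]] := cone_facts Etau Hker.
have [_ [Hpoly _]] := Hcx.
have [hpolyCi [x0 Cx0]] := Hpoly i.
case: (pselect (D t `<=` rec_cone (C i))) => Hsub; last first.
  have Hrr : ~ (D t `<=` rec_cone (rec_cone (C i))) by move/rec_rec.
  by rewrite (asboolF Hsub) (asboolF Hrr) !if_same.
have Hrr : D t `<=` rec_cone (rec_cone (C i)) by apply/rec_rec.
rewrite (asboolT Hsub) (asboolT Hrr).
have -> : rec_cone (proj M (C i)) = proj M (rec_cone (C i)).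
  case: hpolyCi => kk [A [b [_ EC]]]; rewrite EC.
  apply: (rec_proj (A := A) (b := b) _ _ Hker tz zM Hz).
  - by exists x0; rewrite /hpoly -EC.
  - by rewrite /hpoly -EC.
have [r [X HX]] := lspan_basis [set x - y | x in C i & y in C i].
have [rT [T HT]] := lspan_basis [set x - y | x in D t & y in D t].
have hkt : kt = \rank T := (pdim_rank _ HT).1 HdimT.
have HTk : forall x : 'rV[R]_n, (x <= T)%MS <-> (x <= kermx M)%MS.
  move=> x; rewrite sub_kermx; split => [/HT/Hker -> //|/eqP/Hker/HT//].
have rk : \rank T = \rank (kermx M).
  apply/anti_leq; rewrite !mxrankS //; apply/row_subP => j; apply/HTk;
  exact: row_sub.
have LX : forall x, Lsp (D t) x -> (x <= X)%MS.
  apply: lspan_sub => _ [a ta [b tb <-]].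
  have inX : forall a, D t a -> (a <= X)%MS.
    move=> a' ta'; apply/HX; apply: lspan_in.
    exists (x0 + 1 *: a'); first exact: Hsub.
    by exists x0 => //; rewrite scale1r addrC addKr.
  by apply: subB_mx; apply: inX.
have kX : (kermx M <= X)%MS.
  apply/row_subP => j; apply: LX; apply/HT/HTk; exact: row_sub.
have rXM : (\rank (X *m M) + \rank (kermx M))%N = \rank X.
  by rewrite -[RHS](mxrank_mul_ker X M) (capmx_idPr kX).
have rle : (\rank X <= d)%N.
  have [j [Cij Hj]] := Hpure i.
  have [rj [Xj HXj]] := lspan_basis [set x - y | x in C j & y in C j].
  rewrite ((pdim_rank _ HXj).1 Hj); apply: mxrankS; apply/row_subP => q.
  apply/HXj; apply: (Lsp_mono Cij); apply/HX; exact: row_sub.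
congr (if _ then _ else _).
congr (if _ then _ else _).
apply: asbool_equiv_eq; split => h.
  apply: (pdim_rank _ HX).2; have := (pdim_rank _ (Lsp_proj M HX)).1 h.
  rewrite /e; lia.
apply: (pdim_rank _ (Lsp_proj M HX)).2; have := (pdim_rank _ HX).1 h.
rewrite /e; lia.
Qed.
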